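(* Let $\mathcal{X}$ be Polish with a lower semicontinuous metric $d$, let $\alpha,\theta:[0,\infty)\to[0,\infty)$ be convex increasing bijections (so $\alpha(0)=\theta(0)=0$), and let $\mu$ be a Borel probability measure on $\mathcal{X}$ such that $\alpha(\mathcal{T}_{\theta(d)}(\nu,\mu))\le H(\nu|\mu)$ for all Borel probability measures $\nu$. Then for every $x_o\in\mathcal{X}$ there exists $\varepsilon>0$ such that $$\int_{\mathcal{X}}\exp\big(\alpha\circ\theta(\varepsilon\, d(x,x_o))\big)\,d\mu(x)<+\infty.$$
   Context: $\mathcal{T}_{\theta(d)}(\nu,\mu)=\inf_\pi\int\theta(d(x,y))\,d\pi(x,y)$ over couplings $\pi$ of $\nu$ and $\mu$. $H(\nu|\mu)=\int\log\frac{d\nu}{d\mu}d\nu$ if $\nu\ll\mu$, $+\infty$ otherwise. *)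

(* Defs.v *)
From HB Require Import structures.
From mathcomp Require Import all_boot all_order all_algebra.
From mathcomp Require Import all_classical all_reals all_analysis.
Set Implicit Arguments. Unset Strict Implicit. Unset Printing Implicit Defensive.
Import Order.TTheory GRing.Theory Num.Theory.
Import numFieldNormedType.Exports.
Local Open Scope classical_set_scope.
Local Open Scope ring_scope.
Local Open Scope charge_scope.

(* Polish space: the topology of X is induced by a complete metric (X is a
   complete (pseudo)metric space which is Hausdorff, hence metric) and X is
   separable. *)
Definition polish_space (R : realType) (X : completePseudoMetricType R) :=
  hausdorff_space X /\ exists D : set X, countable D /\ dense D.

Definition borel (X : ptopologicalType) := g_sigma_algebraType (@open X).

Definition lsc_metric (X : topologicalType) (R : realType) (d : X -> X -> R) :=
  [/\ forall x y, d x y = 0 <-> x = y,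
      forall x y, d x y = d y x,
      forall x y z, d x z <= d x y + d y z &
      lower_semicontinuous (fun p : X * X => (d p.1 p.2)%:E)].

Definition cvx_incr_bij (R : realType) (f : R -> R) :=
  [/\ forall x, 0 <= x -> 0 <= f x,
      forall x y, 0 <= x -> x < y -> f x < f y,
      forall y, 0 <= y -> exists2 x, 0 <= x & f x = y &
      forall x y t, 0 <= x -> 0 <= y -> 0 <= t <= 1 ->
        f (t * x + (1 - t) * y) <= t * f x + (1 - t) * f y].

Definition ext_fun (R : realType) (f : R -> R) (t : \bar R) : \bar R :=
  match t with
  | r%:E => (f r)%:E
  | +oo%E => +oo%E
  | -oo%E => -oo%E
  end.

Section transport.
Context (R : realType) (X : completePseudoMetricType R).
Local Notation B := (borel X).

Definition coupling (nu mu : probability B R) (pi : probability (B * B)%type R) :=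
  (forall A : set B, measurable A -> pi (A `*` setT) = nu A) /\
  (forall A : set B, measurable A -> pi (setT `*` A) = mu A).

Definition transport_cost (c : X -> X -> R) (nu mu : probability B R) : \bar R :=
  ereal_inf [set v | exists pi : probability (B * B)%type R,
                       coupling nu mu pi /\ v = (\int[pi]_z (c z.1 z.2)%:E)%E].

Definition rel_entropy (nu mu : probability B R) : \bar R :=
  if pselect (nu `<< mu) then
    (\int[nu]_x (ln (fine ('d (charge_of_finite_measure nu) '/d mu x)))%:E)%E
  else +oo%E.
End transport.

(* Main.v *)
Require Import Defs.
From mathcomp Require Import all_boot all_order all_algebra.
From mathcomp Require Import all_classical all_reals all_analysis.
From mathcomp Require Import measurable_realfun.
From mathcomp Require Import ring lra.
Import Order.TTheory GRing.Theory Num.Theory.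
Local Open Scope classical_set_scope.
Local Open Scope ring_scope.
Import HBNNSimple.

Section hint.
Context d (T : measurableType d) (R : realType) (mu : {measure set T -> \bar R}).
Local Open Scope ereal_scope.

Lemma int_lb_nnsfun (h : {nnsfun T >-> R}) (f : T -> \bar R) :
  (forall x, 0 <= f x) -> (forall x, (h x)%:E <= f x) ->
  \int[mu]_x (h x)%:E <= \int[mu]_x f x.
Proof.
move=> f0 hf; rewrite integral_nnsfun// patch_setT ge0_integralTE//.
by apply: ereal_sup_ubound; exists h.
Qed.

Lemma int_ub_meas (f g : T -> \bar R) :
  (forall x, 0 <= f x) -> measurable_fun [set: T] g -> (forall x, f x <= g x) ->
  \int[mu]_x f x <= \int[mu]_x g x.
Proof.
move=> f0 mg fg; rewrite [X in X <= _]ge0_integralTE//.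
apply/ge_ereal_sup => _ [h /= hf <-].
rewrite (_ : sintegral mu h = \int[mu]_x (h x)%:E); last first.
  by rewrite integral_nnsfun// patch_setT.
apply: ge0_le_integral => //.
- by move=> x _; rewrite lee_fin.
- by apply/measurable_EFinP; exact: measurable_funTS.
- by move=> x _; exact: le_trans (hf x) (fg x).
Qed.
End hint.
Section cvx.
Context (R : realType) (f : R -> R) (hf : cvx_incr_bij f).

Lemma cf0 : f 0 = 0.
Proof.
case: hf => f0 finc fsurj _.
have [x x0 fx] := fsurj 0 (lexx 0).
apply/eqP; rewrite eq_le (f0 0 (lexx 0)) andbT.
have [x0'|xp] := eqVneq x 0; first by rewrite -x0' fx.
have xp' : 0 < x by rewrite lt_neqAle eq_sym xp x0.
have := finc 0 x (lexx 0) xp'; rewrite fx => /ltW; exact.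
Qed.

Lemma cf_ge0 x : 0 <= x -> 0 <= f x.
Proof. by case: hf => + _ _ _; apply. Qed.

Lemma cf_le x y : 0 <= x -> x <= y -> f x <= f y.
Proof.
case: hf => _ finc _ _ x0; rewrite le_eqVlt => /ssrbool.orP[/eqP->//|xy].
exact/ltW/finc.
Qed.

Lemma cf_lt x y : 0 <= x -> x < y -> f x < f y.
Proof. by case: hf => _ finc _ _; apply: finc. Qed.

Lemma cf_scale t x : 0 <= x -> 0 <= t <= 1 -> f (t * x) <= t * f x.
Proof.
case: hf => _ _ _ fc x0 t01.
have := fc x 0 t x0 (lexx 0) t01.
by rewrite cf0 !mulr0 !addr0.
Qed.

Lemma cf_1pos : 0 < f 1.
Proof. by rewrite -cf0; apply: cf_lt. Qed.

Lemma cf_lin y : 0 <= y -> f 1 * (y - 1) <= f y.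
Proof.
move=> y0; have f1 := cf_1pos.
have [y1|y1] := leP y 1.
  have := @cf_ge0 y y0; have : f 1 * (y - 1) <= 0 by rewrite pmulr_rle0// subr_le0.
  exact: le_trans.
have yp : 0 < y by apply: lt_trans y1.
have := @cf_scale (y^-1) y y0.
rewrite mulVf ?gt_eqF// invr_ge0 (ltW yp) invf_le1// (ltW y1) => /(_ isT).
rewrite ler_pdivlMl// => H.
apply: le_trans H; rewrite mulrC ler_pM2r//; lra.
Qed.

Lemma cf_double x : 0 <= x -> 2 * f x <= f (2 * x).
Proof.
move=> x0; have := @cf_scale (2^-1) (2 * x).
rewrite mulrA mulVf ?pnatr_eq0// mul1r mulr_ge0//.
move=> /(_ isT); rewrite invr_ge0 invf_le1 ?ler1n// ler0n => /(_ isT).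
by rewrite ler_pdivlMl.
Qed.
End cvx.
Section opn.
Context (R : realType) (X : completePseudoMetricType R) (d : X -> X -> R)
  (hd : lsc_metric d) (xo : X).

Lemma open_gt (r : R) : open [set x : X | r < d x xo].
Proof.
case: hd => _ _ _ /lower_semicontinuousP/(_ r) op.
have -> : [set x : X | r < d x xo] = (fun x => (x, xo)) @^-1` [set p : X * X | (r%:E < (d p.1 p.2)%:E)%E].
  by apply/seteqP; split => x /=; rewrite lte_fin.
apply: open_comp => // x _.
by apply: cvg_pair => //; exact: cvg_cst.
Qed.

Lemma meas_gt (r : R) : measurable ([set x : X | r < d x xo] : set (borel X)).
Proof. by apply: sub_sigma_algebra; exact: open_gt. Qed.

Lemma meas_le (r : R) : measurable ([set x : X | d x xo <= r] : set (borel X)).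
Proof.
have -> : [set x : X | d x xo <= r] = ~` [set x : X | r < d x xo].
  by apply/seteqP; split => x /=; rewrite real_leNgt ?num_real//; move/negP.
by apply: measurableC; exact: meas_gt.
Qed.

Lemma d_ge0 x y : 0 <= d x y.
Proof.
case: hd => d0 dsym dtri _.
have := dtri x y x; rewrite (proj2 (d0 x x) erefl) (dsym y x).
lra.
Qed.
End opn.

Lemma mnormalizeE' dd (T : measurableType dd) (R : realType)
  (m : {measure set T -> \bar R}) (P : probability T R) A :
  m setT != 0%E -> (m setT < +oo)%E ->
  mnormalize m P A = (m A * (fine (m setT))^-1%:E)%E.
Proof.
move=> m0 moo; rewrite /mnormalize (negbTE m0) /=.
by rewrite (_ : (m setT == +oo)%E = false)// lt_eqF.
Qed.

Section cond.
Context (R : realType) (X : completePseudoMetricType R) (d : X -> X -> R)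
  (hd : lsc_metric d) (xo : X) (mu : probability (borel X) R) (r : R).
Local Open Scope ereal_scope.

Let B : set (borel X) := [set x : X | (r < d x xo)%R].
Let mB : measurable B := @meas_gt R X d hd xo r.

Definition nuB : probability (borel X) R := mnormalize (mrestr mu mB) mu.

Hypothesis muB : 0 < mu B.

Let cc := fine (mu B).

Lemma cc_gt0 : (0 < cc)%R.
Proof.
rewrite /cc fine_gt0// muB/= (le_lt_trans (probability_le1 mu mB))// ltey//.
Qed.

Lemma muB_cc : mu B = cc%:E.
Proof. by rewrite /cc fineK// fin_num_measure. Qed.

Lemma nuBE A : nuB A = mu (A `&` B) * (cc^-1)%:E.
Proof.
have E : mu ([set: borel X] `&` B) = cc%:E by rewrite setTI muB_cc.
rewrite /nuB /= mnormalizeE'.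
- by change (mu (A `&` B) * (fine (mu ([set: borel X] `&` B)))^-1%:E = mu (A `&` B) * (cc^-1)%:E); rewrite E.
- by change (mu ([set: borel X] `&` B) != 0); rewrite E eqe gt_eqF// cc_gt0.
- by change (mu ([set: borel X] `&` B) < +oo); rewrite E ltey.
Qed.

Lemma nuB_dom : nuB `<< mu.
Proof.
move=> N muN A mA AN; rewrite nuBE.
have -> : mu (A `&` B) = 0.
  apply/eqP; rewrite eq_le measure_ge0 andbT -(muN A mA AN).
  by apply: le_measure => //; rewrite inE//; exact: measurableI.
by rewrite mul0e.
Qed.

Local Open Scope charge_scope.

Lemma entropyB : rel_entropy nuB mu = (- ln cc)%:E.
Proof.
rewrite /rel_entropy; case: pselect => [numu|nn]; last by exfalso; exact: nn nuB_dom.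
set f := 'd _ '/d mu.
pose g x := (cc^-1)%:E * (\1_B x)%:E.
have fg : ae_eq mu setT f g.
  apply: integral_ae_eq => //.
  - exact: Radon_Nikodym_integrable.
  - apply: measurable_funeM; apply/measurable_EFinP; exact: measurable_indic.
  - move=> E _ mE; rewrite -Radon_Nikodym_integral//.
    rewrite /g ge0_integralZl_EFin//; first last.
    + by rewrite invr_ge0 ltW// cc_gt0.
    + by apply/measurable_EFinP; apply: measurable_funTS; exact: measurable_indic.
    rewrite integral_indic//.
    change (nuB E = (cc^-1)%:E * mu (B `&` E)).
    by rewrite nuBE muleC setIC.
have fg' := null_dominates_ae_eq measurableT numu fg.
have gc : ae_eq nuB setT g (cst (cc^-1)%:E).
  exists (~` B); split.
  - exact: measurableC.
  - by apply: (etrans (nuBE (~` B))); rewrite setICl measure0 mul0e.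
  - move=> x /= gx; apply: contra_not gx => Bx _.
    by rewrite /g indicE mem_set// mule1.
have fc := ae_eq_trans fg' gc.
have lnc := ae_eq_comp (fun v => (ln (fine v))%:E) fc.
rewrite (ae_eq_integral (cst (ln (cc^-1))%:E) (fun x => (ln (fine (f x)))%:E) measurableT _ _ lnc)//; last first.
  apply/measurable_EFinP; apply: measurableT_comp; first exact: measurable_ln.
  apply: measurableT_comp; first exact: fine_measurable.
  apply: measurable_int; exact: Radon_Nikodym_integrable.
rewrite /= integral_cst//.
change ((ln cc^-1)%:E * nuB [set: borel X] = (- ln cc)%:E).
rewrite probability_setT mule1 lnV//.
by rewrite posrE cc_gt0.
Qed.

End cond.

Section tc.
Context (R : realType) (X : completePseudoMetricType R) (d : X -> X -> R)
  (hd : lsc_metric d) (xo : X) (mu : probability (borel X) R) (r s : R)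
  (theta : R -> R) (htheta : cvx_incr_bij theta).
Local Open Scope ereal_scope.

Let B : set (borel X) := [set x : X | (r < d x xo)%R].
Let mB : measurable B := @meas_gt R X d hd xo r.
Let S : set (borel X) := [set x : X | (d x xo <= s)%R].
Let mS : measurable S := @meas_le R X d hd xo s.

Hypothesis muB : 0 < mu B.
Hypothesis hsr : (s <= r)%R.

Lemma tc_lb :
  (theta (r - s) * fine (mu S))%:E <=
  transport_cost (fun x y => theta (d x y)) (@nuB R X d hd xo mu r) mu.
Proof.
rewrite /transport_cost; apply: le_ereal_inf_tmp => _ [pi [[c1 c2] ->]].
have k0 : (0 <= theta (r - s))%R by apply: cf_ge0 => //; rewrite subr_ge0.
have mA : measurable (B `*` S) by exact: measurableX.
pose h := scale_nnsfun (indic_nnsfun R mA) k0.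
have hE : (fun z => (h z)%:E) = (fun z => (theta (r - s))%:E * (\1_(B `*` S) z)%:E).
  by apply/funext => z; rewrite /h /= EFinM.
have : \int[pi]_z (h z)%:E <= \int[pi]_z (theta (d z.1 z.2))%:E.
  apply: int_lb_nnsfun.
  - by move=> z; rewrite lee_fin; apply: cf_ge0 => //; exact: (@d_ge0 R X d hd).
  - move=> z; rewrite /h /= mindicE /=; case: (boolP (z \in B `*` S)).
    + rewrite inE => -[/= Bz Sz]; rewrite mulr1 lee_fin; apply: cf_le => //.
        by rewrite subr_ge0.
      case: hd => _ dsym dtri _.
      have := dtri z.1 z.2 xo; rewrite /B /S /= in Bz Sz; lra.
    + by move=> _; rewrite mulr0 lee_fin; apply: cf_ge0 => //; exact: (@d_ge0 R X d hd).
move=> H; apply: le_trans H.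
rewrite hE ge0_integralZl_EFin//; last first.
  by apply/measurable_EFinP; exact: measurable_indic.
rewrite integral_indic// setIT.
rewrite EFinM; apply: lee_wpmul2l; first by rewrite lee_fin.
rewrite fineK ?fin_num_measure//.
have mCB : measurable (~` B) by exact: measurableC.
have -> : mu S = pi (setT `*` S) by rewrite c2.
have E : setT `*` S = (B `*` S) `|` (~` B `*` S).
  apply/seteqP; split=> [[z1 z2] [_ /= Sz]|[z1 z2] [[Bz Sz]|[Bz Sz]]//].
  by have [Bz|Bz] := pselect (B z1); [left|right].
rewrite E (le_trans (measureU2 _ _ _))//; first exact: measurableX.
apply: (@le_trans _ _ (pi (B `*` S) + 0)); last by rewrite adde0.
apply: leeD2l.
have <- : @nuB R X d hd xo mu r (~` B) = 0.
  by apply: (etrans (@nuBE R X d hd xo mu r muB _)); rewrite setICl measure0 mul0e.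
rewrite -c1//; apply: le_measure; rewrite ?inE//; try exact: measurableX.
by move=> [z1 z2] [].
Qed.
End tc.

Section tail.
Context (R : realType) (X : completePseudoMetricType R) (d : X -> X -> R)
  (hd : lsc_metric d) (xo : X) (mu : probability (borel X) R)
  (alpha theta : R -> R) (halpha : cvx_incr_bij alpha) (htheta : cvx_incr_bij theta)
  (hT : forall nu : probability (borel X) R,
      (ext_fun alpha (transport_cost (fun x y => theta (d x y)) nu mu)
       <= rel_entropy nu mu)%E).
Local Open Scope ereal_scope.

Lemma tail_bound (r s : R) : (s <= r)%R ->
  mu [set x : borel X | (r < d x xo)%R] <=
  (expR (- alpha (theta (r - s) * fine (mu [set x : borel X | (d x xo <= s)%R]))))%:E.
Proof.
move=> hsr.
set B := [set x : borel X | (r < d x xo)%R].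
set S := [set x : borel X | (d x xo <= s)%R].
have [muB0|muB] := eqVneq (mu B) 0.
  by rewrite muB0 lee_fin expR_ge0.
have muBp : 0 < mu B by rewrite lt_neqAle eq_sym muB measure_ge0.
have H := hT (@nuB R X d hd xo mu r).
rewrite (@entropyB R X d hd xo mu r muBp) in H.
have L := @tc_lb R X d hd xo mu r s theta htheta muBp hsr.
set T := transport_cost _ _ _ in H L.
have k0 : (0 <= theta (r - s) * fine (mu S))%R.
  apply: mulr_ge0; first by apply: cf_ge0 => //; rewrite subr_ge0.
  by apply: fine_ge0; exact: measure_ge0.
have A : (alpha (theta (r - s) * fine (mu S)) <= - ln (fine (mu B)))%R.
  move: H L; case: T => [t| |] /=.
  - rewrite !lee_fin => H L; apply: le_trans H; exact: cf_le.
  - by rewrite leye_eq.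
  - by rewrite leeNy_eq.
have cc0 : (0 < fine (mu B))%R.
  by rewrite fine_gt0// muBp/= (le_lt_trans (probability_le1 mu _))// ?ltey//; exact: meas_gt.
rewrite -(@fineK _ (mu B)) ?fin_num_measure//; last exact: meas_gt.
rewrite lee_fin -(lnK cc0) ?posrE//.
by rewrite ler_expR lerNr.
Qed.
End tail.

Section exs.
Context (R : realType) (X : completePseudoMetricType R) (d : X -> X -> R)
  (hd : lsc_metric d) (xo : X) (mu : probability (borel X) R).
Local Open Scope ereal_scope.

Lemma exists_s : exists n : nat, 0 < mu [set x : borel X | (d x xo <= n%:R)%R].
Proof.
case: (pselect (exists n : nat, 0 < mu [set x : borel X | (d x xo <= n%:R)%R])) => // H.
exfalso.
have H0 n : mu [set x : borel X | (d x xo <= n%:R)%R] = 0.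
  apply/eqP; rewrite eq_le measure_ge0 andbT leNgt; apply/negP => Hn.
  by apply: H; exists n.
have H1 : mu setT <= \sum_(n <oo) mu [set x : borel X | (d x xo <= n%:R)%R].
  apply: measure_sigma_subadditive => //.
  - by move=> n; exact: (@meas_le R X d hd xo).
  - move=> x _; exists (Num.bound (d x xo)) => //=.
    apply: ltW; apply: archi_boundP; exact: (@d_ge0 R X d hd).
have S0 : \sum_(n <oo) mu [set x : borel X | (d x xo <= n%:R)%R] = 0.
  by apply: eseries0 => n _ _; exact: H0.
by move: H1; rewrite S0 probability_setT lee_fin ler10.
Qed.
End exs.

Section rb.
Context (R : realType) (alpha theta : R -> R) (ha : cvx_incr_bij alpha)
  (ht : cvx_incr_bij theta).

Let phi_le u v : 0 <= u -> u <= v -> alpha (theta u) <= alpha (theta v).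
Proof.
move=> u0 uv; apply: (@cf_le _ _ ha); first exact: (@cf_ge0 _ _ ht).
exact: (@cf_le _ _ ht).
Qed.

Lemma real_bound (s m : R) : 0 <= s -> 0 < m -> m <= 1 ->
  exists M q, [/\ 0 <= M, 0 <= q, q < 1 &
   forall (k : nat) (p : R), 0 <= p -> p <= 1 ->
     (s <= k%:R - 1 -> p <= expR (- alpha (theta (k%:R - 1 - s) * m))) ->
     expR (alpha (theta (m / 8 * k.+1%:R))) * p <= M * q ^+ k].
Proof.
move=> s0 m0 m1.
set a1 := alpha 1; set t1 := theta 1; set g := a1 * t1 * m / 4.
set C := a1 * (t1 + 1).
have a1p : 0 < a1 := @cf_1pos _ _ ha.
have t1p : 0 < t1 := @cf_1pos _ _ ht.
have gp : 0 < g by rewrite /g !mulr_gt0.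
set K0 := Num.bound (2 * (1 + s)).
have hK0 : 2 * (1 + s) < K0%:R by apply: archi_boundP; lra.
pose A (t : R) := expR (alpha (theta (m / 8 * t))).
have A0 t : 0 <= A t by exact: expR_ge0.
exists (expR C + A (K0.+1%:R) * expR (g * K0%:R)), (expR (- g)); split.
- by rewrite addr_ge0 ?mulr_ge0 ?expR_ge0.
- exact: expR_ge0.
- by rewrite expR_lt1 oppr_lt0.
move=> k p p0 p1 hp.
rewrite -expRM_natr.
have hk1 : (k.+1%:R : R) = k%:R + 1 by rewrite -natr1.
have k0 : (0 : R) <= k%:R by rewrite ler0n.
have [kK|kK] := leqP K0 k.
- have kK' : (K0%:R : R) <= k%:R by rewrite ler_nat.
  have hs : s <= k%:R - 1 by lra.
  have {hp}hp := hp hs.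
  set x := k%:R - 1 - s.
  set y := m * k%:R / 4.
  have y0 : 0 <= y by rewrite /y !mulr_ge0 ?invr_ge0// ltW.
  have x0 : 0 <= x by rewrite /x; lra.
  have k1 : (1 : R) <= k%:R by lra.
  have T1 : 2 * theta y <= theta x * m.
    apply: (le_trans (@cf_double _ _ ht _ y0)).
    apply: (@le_trans _ _ (theta (m * x))).
      apply: (@cf_le _ _ ht); first by rewrite mulr_ge0.
      rewrite /y /x; nra.
    rewrite [theta x * m]mulrC; apply: (@cf_scale _ _ ht m x x0); rewrite ltW //=.
  have ty0 : 0 <= theta y := @cf_ge0 _ _ ht _ y0.
  have A1 : 2 * alpha (theta y) <= alpha (theta x * m).
    apply: (le_trans (@cf_double _ _ ha _ ty0)).
    by apply: (@cf_le _ _ ha) => //; rewrite mulr_ge0.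
  have A2 : alpha (theta (m / 8 * k.+1%:R)) <= alpha (theta y).
    apply: phi_le; first by rewrite hk1 mulr_ge0// ?divr_ge0 ?ltW//; lra.
    rewrite hk1 /y; nra.
  have A3 : g * k%:R - C <= alpha (theta y).
    apply: (le_trans _ (@cf_lin _ _ ha _ ty0)).
    have := @cf_lin _ _ ht _ y0; rewrite -/t1 -/a1 => H.
    have : a1 * (t1 * (y - 1) - 1) <= a1 * (theta y - 1).
      by rewrite ler_pM2l//; lra.
    apply: le_trans; rewrite /g /C /y; nra.
  apply: (le_trans (ler_wpM2l (expR_ge0 _) hp)).
  rewrite -expRD.
  apply: (@le_trans _ _ (expR (C + - g * k%:R))).
    by rewrite ler_expR; lra.
  rewrite expRD ler_wpM2r ?expR_ge0//.
  by rewrite lerDl mulr_ge0 ?expR_ge0.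
- have A1 : A k.+1%:R <= A K0.+1%:R.
    rewrite /A ler_expR; apply: phi_le.
      by rewrite mulr_ge0 ?divr_ge0 ?ltW.
    rewrite ler_pM2l ?divr_gt0// ler_nat; exact: ltnW.
  have E1 : 1 <= expR (g * K0%:R) * expR (- g * k%:R).
    rewrite -expRD; apply: le_trans (expR_ge1Dx _).
    have : (k%:R : R) <= K0%:R by rewrite ler_nat ltnW.
    nra.
  apply: (@le_trans _ _ (A k.+1%:R)).
    by rewrite -[leRHS]mulr1 ler_wpM2l.
  apply: (le_trans A1).
  apply: (@le_trans _ _ (A K0.+1%:R * (expR (g * K0%:R) * expR (- g * k%:R)))).
    by rewrite -[leLHS]mulr1 ler_wpM2l.
  rewrite mulrA ler_wpM2r ?expR_ge0//.
  by rewrite lerDr expR_ge0.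
Qed.
End rb.

Lemma eseries_geo (R : realType) (M q : R) : 0 <= M -> 0 <= q -> q < 1 ->
  (\sum_(k <oo) (M * q ^+ k)%:E = (M / (1 - q))%:E)%E.
Proof.
move=> M0 q0 q1; apply: cvg_lim => //.
apply: cvg_EFin.
  by apply: nearW => n; rewrite sumEFin.
rewrite (_ : (fine \o _) = series (geometric M q)); last first.
  by apply/funext => n; rewrite /= sumEFin /= /series /=.
apply: cvg_geometric_series.
by rewrite ger0_norm.
Qed.

Theorem mainTheorem8 (R : realType) (X : completePseudoMetricType R)
  (d : X -> X -> R) (alpha theta : R -> R)
  (mu : probability (borel X) R) :
  polish_space X ->
  lsc_metric d ->
  cvx_incr_bij alpha -> cvx_incr_bij theta ->
  (forall nu : probability (borel X) R,
      (ext_fun alpha (transport_cost (fun x y => theta (d x y)) nu mu)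
       <= rel_entropy nu mu)%E) ->
  forall xo : X, exists2 eps : R, 0 < eps &
    (\int[mu]_x (expR (alpha (theta (eps * d x xo))))%:E < +oo)%E.
Proof.
move=> _ hd ha ht hT xo.
have [n0 hn0] := @exists_s R X d hd xo mu.
set S := [set x : borel X | d x xo <= n0%:R] in hn0.
have mS : measurable S := @meas_le R X d hd xo _.
set m := fine (mu S).
have m0 : 0 < m by rewrite fine_gt0// hn0/= (le_lt_trans (probability_le1 mu mS))// ltey.
have m1 : m <= 1.
  by rewrite -lee_fin /m fineK ?fin_num_measure// probability_le1.
have [M [q [M0 q0 q1 Hb]]] := @real_bound R alpha theta ha ht n0%:R m (ler0n _ _) m0 m1.
exists (m / 8); first by rewrite divr_gt0.
pose E (k : nat) : set (borel X) := [set x : borel X | k%:R - 1 < d x xo].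
have mE k : measurable (E k) := @meas_gt R X d hd xo _.
pose a (k : nat) := expR (alpha (theta (m / 8 * k.+1%:R))).
pose u (k : nat) (x : borel X) := ((a k) * \1_(E k) x)%:E.
have mu_ k : measurable_fun setT (u k).
  apply/measurable_EFinP; apply: measurable_funM => //; exact: measurable_indic.
have u0 k x : (0 <= u k x)%E by rewrite lee_fin mulr_ge0 ?expR_ge0.
apply: (@le_lt_trans _ _ (\int[mu]_x (\sum_(k <oo) u k x))%E).
  apply: int_ub_meas.
  - by move=> x; rewrite lee_fin expR_ge0.
  - by apply: ge0_emeasurable_sum.
  - move=> x.
    have dx0 : 0 <= d x xo := @d_ge0 R X d hd x xo.
    set j := Num.truncn (d x xo).
    have /andP[hj1 hj2] := truncn_itv dx0.
    apply: (le_trans _ (nneseries_lim_ge j.+1 _)); last by move=> *; exact: u0.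
    rewrite big_nat_recr//=.
    apply: (le_trans _ (leeDr _ _)); last by apply: sume_ge0 => *; exact: u0.
    rewrite /u /a indicE mem_set ?mulr1; last first.
      by rewrite /E /=; rewrite -/j in hj1; lra.
    rewrite lee_fin ler_expR.
    have m8 : 0 <= m / 8 by rewrite divr_ge0 ?ltW.
    have e0 : 0 <= m / 8 * d x xo by rewrite mulr_ge0.
    apply: (@cf_le _ _ ha _ _ (@cf_ge0 _ _ ht _ e0)).
    apply: (@cf_le _ _ ht _ _ e0).
    by rewrite ler_pM2l ?divr_gt0// ltW.
rewrite integral_nneseries//.
apply: (@le_lt_trans _ _ (\sum_(k <oo) (M * q ^+ k)%:E)%E); last first.
  by rewrite eseries_geo// ltey.
apply: lee_nneseries.
  by move=> k _ _; apply: integral_ge0 => x _; exact: u0.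
move=> k _.
rewrite /u.
under eq_integral do rewrite EFinM.
rewrite ge0_integralZl_EFin//; last 2 first.
- by apply/measurable_EFinP; exact: measurable_indic.
- exact: expR_ge0.
rewrite integral_indic// setIT.
change ((a k)%:E * mu (E k) <= (M * q ^+ k)%:E)%E.
rewrite -(@fineK _ (mu (E k))) ?fin_num_measure// -EFinM lee_fin.
apply: Hb.
- by apply: fine_ge0; exact: measure_ge0.
- by rewrite -lee_fin fineK ?fin_num_measure// probability_le1.
- move=> hs.
  have := @tail_bound R X d hd xo mu alpha theta ha ht hT (k%:R - 1) n0%:R hs.
  by rewrite -(@fineK _ (mu (E k))) ?fin_num_measure// lee_fin.
Qed.
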